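(* Let $q$ be a prime power, $M\geq2$ an integer with $(M,q)=1$, and $m\geq1$. Let $X\in\mathrm{Sp}(2m,q)$ be conjugate in $\mathrm{GL}(2m,q)$ to the $2m\times 2m$ matrix with $-1$ on the diagonal, $1$ on the superdiagonal and $0$ elsewhere (a single Jordan block with eigenvalue $-1$). Then $X$ is an $M$-th power in $\mathrm{Sp}(2m,q)$ if and only if $M$ is odd.
   Context: $\mathrm{Sp}(2m,q)$ is the symplectic group of a non-degenerate alternating form on $\mathbb{F}_q^{2m}$. An element $X$ of a group $G$ is an $M$-th power in $G$ if $Y^M=X$ for some $Y\in G$. *)

(* Defs.v *)
From HB Require Import structures.
From mathcomp Require Import all_boot all_order all_algebra all_fingroup all_field.
Set Implicit Arguments. Unset Strict Implicit. Unset Printing Implicit Defensive.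
Import GRing.Theory.
Local Open Scope ring_scope.

(* Matrix powers for square matrices of arbitrary size n (no ring structure needed). *)
Fixpoint mxpow (F : fieldType) (n : nat) (A : 'M[F]_n) (k : nat) : 'M[F]_n :=
  match k with
  | 0 => 1%:M
  | k'.+1 => A *m mxpow A k'
  end.

Definition nondeg_alternating (F : fieldType) (n : nat) (J : 'M[F]_n) : Prop :=
  J^T = - J /\ (forall i, J i i = 0) /\ J \in unitmx.

Definition symplectic (F : fieldType) (n : nat) (J : 'M[F]_n) (A : 'M[F]_n) : Prop :=
  A *m J *m A^T = J.

Definition jordan_neg1 (F : fieldType) (n : nat) : 'M[F]_n :=
  \matrix_(i < n, j < n)
    (if i == j then -1 else if (j : nat) == (i : nat).+1 then 1 else 0).

Definition is_Mth_power_Sp (F : fieldType) (n : nat) (J : 'M[F]_n) (M : nat)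
  (X : 'M[F]_n) : Prop :=
  exists Y : 'M[F]_n, symplectic J Y /\ mxpow Y M = X.

(* Main.v *)
Require Import Defs.
From HB Require Import structures.
From mathcomp Require Import all_boot all_order all_algebra all_fingroup all_field.
From mathcomp Require Import cyclic zify.
Local Open Scope ring_scope.
Import GRing.Theory.
Set Implicit Arguments. Unset Strict Implicit.

Section Gen.
Variable (F : fieldType) (n : nat).
Implicit Types A B P : 'M[F]_n.

Lemma mxpowSr A k : mxpow A k.+1 = mxpow A k *m A.
Proof.
elim: k => [|k IH]; first by rewrite /= mulmx1 mul1mx.
change (A *m mxpow A k.+1 = (A *m mxpow A k) *m A).
by rewrite IH mulmxA.
Qed.

Lemma mxpowD A a b : mxpow A (a + b) = mxpow A a *m mxpow A b.
Proof. by elim: a => [|a IH] /=; rewrite ?mul1mx // IH mulmxA. Qed.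

Lemma mxpowM A a b : mxpow A (a * b) = mxpow (mxpow A a) b.
Proof. by elim: b => [|b IH]; rewrite ?muln0 // mulnS mxpowD IH. Qed.

Lemma mxpow1 k : mxpow (1%:M : 'M[F]_n) k = 1%:M.
Proof. by elim: k => [|k IH] //=; rewrite IH mulmx1. Qed.

Lemma mxpow_comm A B k : A *m B = B *m A -> mxpow A k *m B = B *m mxpow A k.
Proof.
move=> c; elim: k => [|k IH] /=; first by rewrite mul1mx mulmx1.
by rewrite -mulmxA IH !mulmxA c.
Qed.

Lemma mxpow_conj P A k : P \in unitmx ->
  mxpow (P *m A *m invmx P) k = P *m mxpow A k *m invmx P.
Proof.
move=> Pu; elim: k => [|k IH] /=; first by rewrite mulmx1 mulmxV.
by rewrite IH !mulmxA mulmxKV.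
Qed.

Lemma mxpow_tr A k : (mxpow A k)^T = mxpow A^T k.
Proof.
elim: k => [|k IH] /=; first by rewrite trmx1.
by rewrite trmx_mul IH -mxpowSr.
Qed.

Lemma sympl_mul J A B : symplectic J A -> symplectic J B -> symplectic J (A *m B).
Proof.
rewrite /symplectic => hA hB.
rewrite trmx_mul !mulmxA -[A *m B *m J]mulmxA -[A *m _ *m B^T]mulmxA hB.
exact: hA.
Qed.

Lemma sympl_pow J A k : symplectic J A -> symplectic J (mxpow A k).
Proof.
move=> hA; elim: k => [|k IH] /=; last exact: sympl_mul.
by rewrite /symplectic trmx1 mulmx1 mul1mx.
Qed.

Definition shiftmx : 'M[F]_n := \matrix_(i, j) (((j : nat) == i.+1)%:R : F).

Lemma shift_pow k : mxpow shiftmx k = \matrix_(i, j) (((j : nat) == (i + k)%N)%:R : F).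
Proof.
elim: k => [|k IH] /=.
  apply/matrixP => i j; rewrite !mxE addn0 eq_sym.
  by case: (i == j).
apply/matrixP => i j; rewrite IH /shiftmx !mxE.
under eq_bigr do rewrite !mxE.
case: (ltnP i.+1 n) => hi.
  have -> : (i + k.+1 = i.+1 + k)%N by lia.
  rewrite (bigD1 (Ordinal hi)) //= big1.
    rewrite addr0 (_ : (i.+1 == i.+1) = true); last by apply/eqP.
    by rewrite mul1r.
  move=> l hl.
  case: eqP => [e|]; last by rewrite mul0r.
  by case/eqP: hl; apply: val_inj.
rewrite big1.
  case: eqP => // e; have := ltn_ord j; lia.
move=> l _.
case: eqP => [e|]; last by rewrite mul0r.
have := ltn_ord l; lia.
Qed.

Lemma jordan_shift : jordan_neg1 F n + 1%:M = shiftmx.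
Proof.
apply/matrixP => i j; rewrite !mxE.
case: eqP => [->|ne].
  rewrite (_ : (j == j.+1 :> nat) = false); last by apply/eqP; lia.
  by rewrite addNr.
by case: ifP => _; rewrite addr0.
Qed.

End Gen.
Section NoSqrt.
Lemma conjK (F : fieldType) (n : nat) (P A B : 'M[F]_n) : P \in unitmx ->
  P *m A *m invmx P = P *m B *m invmx P -> A = B.
Proof.
move=> Pu /(congr1 (fun C => invmx P *m C *m P)).
by rewrite !mulmxA !mulVmx // !mul1mx !mulmxKV.
Qed.

Lemma mul_mx_deltaE (F : fieldType) m n p (A : 'M[F]_(m, n)) (a : 'I_n) (b : 'I_p) i j :
  (A *m delta_mx a b) i j = A i a * (j == b)%:R.
Proof.
rewrite mxE (bigD1 a) //= mxE eqxx /= big1 ?addr0 // => l hl.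
by rewrite mxE (negbTE hl) mulr0.
Qed.

Lemma mul_delta_mxE (F : fieldType) m n p (A : 'M[F]_(n, p)) (a : 'I_m) (b : 'I_n) i j :
  (delta_mx a b *m A) i j = (i == a)%:R * A b j.
Proof.
rewrite mxE (bigD1 b) //= mxE eqxx andbT big1 ?addr0 // => l hl.
by rewrite mxE (negbTE hl) andbF mul0r.
Qed.

Variable (F : fieldType) (n : nat).
Implicit Types A B P : 'M[F]_n.

Lemma no_sqrt (J X P Z : 'M[F]_n) :
  (2 : F) != 0 -> (0 < n)%N -> ~~ odd n -> J \in unitmx -> P \in unitmx ->
  X = P *m jordan_neg1 F n *m invmx P ->
  symplectic J X -> symplectic J Z -> Z *m Z = X -> False.
Proof.
move=> two0 n0 nev Ju Pu eX sX sZ ZZ.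
set S := shiftmx F n.
set N := X + 1%:M.
have eN : N = P *m S *m invmx P.
  by rewrite /N /S eX -jordan_shift mulmxDr mulmxDl mulmx1 mulmxV.
set E := mxpow S n.-1.
set K := mxpow N n.-1.
have eK : K = P *m E *m invmx P by rewrite /K eN mxpow_conj.
have NK : N *m K = 0.
  rewrite /K -[N *m _]/(mxpow N n.-1.+1) prednK // eN mxpow_conj // shift_pow.
  suff -> : (\matrix_(i, j) ((j : nat) == (i + n)%N)%:R : 'M[F]_n) = 0.
    by rewrite mulmx0 mul0mx.
  apply/matrixP => i j; rewrite !mxE.
  case: eqP => // e; have := ltn_ord j; lia.
have KN : K *m N = 0 by rewrite /K mxpow_comm.
have eX' : X = N - 1%:M by rewrite /N addrK.
have XK : X *m K = - K by rewrite eX' mulmxBl NK mul1mx sub0r.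
have KX : K *m X = - K by rewrite eX' mulmxBr KN mulmx1 sub0r.
have ZX : Z *m X = X *m Z by rewrite -ZZ mulmxA.
have ZN : Z *m N = N *m Z by rewrite /N mulmxDr mulmxDl mulmx1 mul1mx ZX.
have ZK : Z *m K = K *m Z by rewrite /K mxpow_comm.
have [Z' eZ] : exists Z', Z = P *m Z' *m invmx P.
  by exists (invmx P *m Z *m P); rewrite !mulmxA mulmxV // mul1mx mulmxK.
have ZE : Z' *m E = E *m Z'.
  apply: (conjK Pu); move: ZK; rewrite eZ eK !mulmxA !mulmxKV //.
have hn1 : (n.-1 < n)%N by lia.
pose i0 : 'I_n := Ordinal n0.
pose iL : 'I_n := Ordinal hn1.
have eE : E = delta_mx i0 iL.
  apply/matrixP => i j; rewrite /E shift_pow !mxE -!val_eqE /=.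
  have := ltn_ord i; have := ltn_ord j.
  move: (val i) (val j) => a b ha hb.
  congr (_%:R).
  case: (b =P (a + n.-1)%N); case: (a =P 0%N); case: (b =P n.-1) => /=; lia.
pose l : F := Z' i0 i0.
have Z'E : Z' *m E = l *: E.
  apply/matrixP => i j; rewrite eE mul_mx_deltaE !mxE.
  have := congr1 (fun C : 'M[F]_n => C i iL) ZE; rewrite eE mul_mx_deltaE mul_delta_mxE eqxx mulr1.
  case: (eqVneq i i0) => [->|ne] h; first by [].
  by rewrite h /= !mul0r mulr0.
have ZKl : Z *m K = l *: K.
  rewrite eZ eK !mulmxA mulmxKV // -(mulmxA P Z') Z'E scalemxAl scalemxAr.
  by [].
have KZ : K *m Z = l *: K by rewrite -ZK.
have Knz : K != 0.
  apply/eqP => K0; have : E = 0.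
    apply: (conjK Pu); by rewrite -eK K0 mulmx0 mul0mx.
  move/(congr1 (fun C : 'M[F]_n => C i0 iL)); rewrite eE !mxE !eqxx /=.
  by apply/eqP; rewrite oner_eq0.
have l2 : l * l = -1.
  have : (l * l) *: K = - K.
    by rewrite -scalerA -ZKl scalemxAr -ZKl mulmxA ZZ XK.
  move/eqP; rewrite -addr_eq0 -{2}(scale1r K) -scalerDl scaler_eq0 (negbTE Knz) orbF.
  by rewrite addr_eq0 => /eqP.
have NT : N^T = X^T + 1%:M by rewrite /N linearD /= trmx1.
have JN : J *m N^T = N *m J *m X^T.
  rewrite NT /N mulmxDr mulmxDl !mulmxDl mulmx1 mul1mx sX addrC.
  by [].
have XN : X *m N = N *m X by rewrite /N mulmxDr mulmxDl mulmx1 mul1mx.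
have XNT : N^T *m X^T = X^T *m N^T by rewrite -!trmx_mul XN.
have JNk : forall k, J *m mxpow N^T k = mxpow N k *m J *m mxpow X^T k.
  elim => [|k IH]; first by rewrite /= mulmx1 mul1mx mulmx1.
  rewrite [mxpow N^T k.+1]/= mulmxA JN -(mulmxA (N *m J) X^T) -(mxpow_comm k XNT).
  rewrite mulmxA -(mulmxA N J) IH (mxpowSr X^T) [mxpow N k.+1]/= !mulmxA.
  by [].
have KJX : K *m J *m X^T = - (K *m J).
  have eK2 : K = - (K *m X) by rewrite KX opprK.
  by rewrite {1}eK2 !mulNmx -(mulmxA K X) -(mulmxA K) sX.
have KJXk : forall k, K *m J *m mxpow X^T k = (-1) ^+ k *: (K *m J).
  elim => [|k IH]; first by rewrite /= mulmx1 scale1r.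
  by rewrite mxpowSr mulmxA IH -scalemxAl KJX scalerN exprS mulN1r scaleNr.
have JKT : J *m K^T = - (K *m J).
  rewrite /K mxpow_tr JNk -/K KJXk -signr_odd.
  have -> : odd n.-1 by move: nev; rewrite -{1}(prednK n0) /=; case: (odd n.-1).
  by rewrite expr1 scaleN1r.
have eKJ : K *m J = - (J *m K^T) by rewrite JKT opprK.
have KJZ : K *m J *m Z^T = l *: (K *m J).
  rewrite eKJ mulNmx -mulmxA -trmx_mul ZKl linearZ /= -scalemxAr scalerN.
  by [].
have KJ1 : K *m J = (l * l) *: (K *m J).
  by rewrite -{1}sZ !mulmxA KZ -!scalemxAl KJZ scalerA.
rewrite l2 scaleN1r in KJ1.
have : (2 : F) *: (K *m J) = 0 by rewrite scaler_nat mulr2n {1}KJ1 addNr.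
move/eqP; rewrite scaler_eq0 (negbTE two0) /= => /eqP KJ0.
by move/eqP: Knz; apply; rewrite -(mulmxK Ju K) KJ0 mul0mx.
Qed.
End NoSqrt.

Lemma mxpowE (F : fieldType) n (A : 'M[F]_n.+1) k : mxpow A k = A ^+ k.
Proof. by elim: k => [|k IH] //=; rewrite IH exprS mulmxE. Qed.

Lemma shift_nil (F : fieldType) n : mxpow (shiftmx F n) n = 0.
Proof.
rewrite shift_pow; apply/matrixP => i j; rewrite !mxE.
case: eqP => // e; have := ltn_ord j; lia.
Qed.

Lemma X_order (F : fieldType) n (X P : 'M[F]_n) p : p \in [pchar F] ->
  P \in unitmx -> X = P *m jordan_neg1 F n *m invmx P ->
  mxpow X (p ^ n * 2) = 1%:M.
Proof.
move=> pc Pu eX.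
case: n X P Pu eX => [|n'] X P Pu eX.
  by apply/matrixP => [[]].
set N := X + 1%:M.
have eN : N = P *m shiftmx F n'.+1 *m invmx P.
  by rewrite /N eX -jordan_shift mulmxDr mulmxDl mulmx1 mulmxV.
have hlt : (n'.+1 < p ^ n'.+1)%N by apply: ltn_expl; apply: prime_gt1; case/andP: pc.
have Nq : N ^+ (p ^ n'.+1)%N = 0.
  rewrite -(subnKC (ltnW hlt)) exprD -mxpowE eN mxpow_conj // shift_nil.
  by rewrite mulmx0 mul0mx mul0r.
have pc' : p \in [pchar 'M[F]_n'.+1] by rewrite pchar_lalg.
have frob : forall e, (X + 1) ^+ (p ^ e)%N = X ^+ (p ^ e)%N + 1.
  elim => [|e IH]; first by rewrite !expr1.
  rewrite expnSr !exprM IH.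
  have := pFrobenius_autD_comm pc' (commr1 (X ^+ (p ^ e)%N)).
  by rewrite !pFrobenius_autE expr1n.
move: Nq; rewrite /N frob => /eqP; rewrite addr_eq0 => /eqP Xq.
by rewrite mxpowE exprM Xq sqrrN expr1n.
Qed.

Lemma card_pchar (F : finFieldType) p : p \in [pchar F] -> (p %| #|F|)%N.
Proof.
move=> pc; rewrite (dvdn_pcharf pc).
have := @expg_cardG _ [set: F] (1%R : F) (in_setT _).
by rewrite FinRing.zmodXgE cardsT => ->.
Qed.

Theorem corollary7p3 (F : finFieldType) (M m : nat) (J : 'M[F]_(2 * m))
  (X : 'M[F]_(2 * m)) :
  (2 <= M)%N -> coprime M #|F| -> (1 <= m)%N ->
  nondeg_alternating J ->
  symplectic J X ->
  (exists P : 'M[F]_(2 * m), P \in unitmx /\ X = P *m jordan_neg1 F (2 * m) *m invmx P) ->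
  (is_Mth_power_Sp J M X <-> odd M).
Proof.
move=> M2 cop m1 [_ [_ Ju]] sX [P [Pu eX]].
have [p pp pc] := finPcharP F.
have pF : (p %| #|F|)%N := card_pchar pc.
split.
  move=> [Y [sY YM]]; apply/negPn/negP => ev.
  have two0 : (2 : F) != 0.
    apply/negP => /eqP t.
    have c2 : 2 \in [pchar F] by rewrite inE /= t eqxx.
    have := card_pchar c2 => d2.
    have : coprime 2 #|F| by apply: coprime_dvdl cop; rewrite dvdn2.
    by move/(coprime_dvdr d2).
  have Mh : M = (M./2 + M./2)%N.
    by rewrite addnn -{1}(odd_double_half M) (negbTE ev).
  apply: (no_sqrt two0 _ _ Ju Pu eX sX (sympl_pow M./2 sY)).
  - lia.
  - by rewrite oddM.
  - by rewrite -mxpowD -Mh.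
move=> oM.
have M0 : (0 < M)%N by lia.
have Xq := X_order pc Pu eX.
have cMq : coprime M (p ^ (2 * m) * 2).
  rewrite coprimeMr coprimen2 oM andbT coprime_pexpr; last by lia.
  exact: coprime_dvdr pF cop.
case/(coprimeP _ M0): cMq => [[a b] /= hab].
exists (mxpow X a); split; first exact: sympl_pow.
rewrite -mxpowM (_ : (a * M = 1 + b * (p ^ (2 * m) * 2))%N); last by lia.
by rewrite mxpowD (mulnC b) mxpowM Xq mxpow1 /= !mulmx1.
Qed.
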